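(* Let $(B_{i,j})_{i,j\in\mathbb{Z}}$ be an infinite matrix with $B_{i,j}=0$ whenever $i\le 0$ or $j\le 0$. Then there is a unique infinite matrix $(A_{i,j})_{i,j\in\mathbb{Z}}$ such that $$B_{i,j}=A_{i,j}-A_{i-1,j}-A_{i,j-1}\quad\text{for all } i,j\in\mathbb{Z}$$ and $A_{0,j}=A_{i,0}=0$ for all $i,j\in\mathbb{Z}$. It is given by $$A_{i,j}=\sum_{k=0}^{\infty}\sum_{l=0}^{k}\binom{k}{l}B_{i-l,j-k+l}.$$
   Context: In the paper the defining relation is written as $B_{i,j}=(\mathrm{id}-(E_i^{-1}+E_j^{-1}))A_{i,j}$, where $E_x$ is the shift operator $E_x a(x)=a(x+1)$; this equals $A_{i,j}-A_{i-1,j}-A_{i,j-1}$. *)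

(* Defs.v *)
From HB Require Import structures.
From mathcomp Require Import all_boot all_order all_algebra.
Set Implicit Arguments. Unset Strict Implicit. Unset Printing Implicit Defensive.
Import Order.TTheory GRing.Theory Num.Theory.
Local Open Scope ring_scope.

(* An infinite series  sum_{k>=0} f k  in an abelian group (no topology):
   it "equals" s when its partial sums are eventually equal to s.
   (In the statement all but finitely many terms vanish.) *)
Definition has_sum (R : zmodType) (f : nat -> R) (s : R) : Prop :=
  exists N : nat, forall M : nat, (N <= M)%N -> \sum_(k < M) f k = s.

Definition solves (R : zmodType) (B A : int -> int -> R) : Prop :=
  (forall i j : int, B i j = A i j - A (i - 1) j - A i (j - 1)) /\
  (forall j : int, A 0 j = 0) /\ (forall i : int, A i 0 = 0).

Definition formula_term (R : zmodType) (B : int -> int -> R) (i j : int) (k : nat) : R :=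
  \sum_(l < k.+1) B (i - (l : nat)%:Z) (j - k%:Z + (l : nat)%:Z) *+ 'C(k, l).

(* Main.v *)
Require Import Defs.
From mathcomp Require Import all_boot all_order all_algebra.
From mathcomp Require Import zify.
Import GRing.Theory Num.Theory.
Local Open Scope ring_scope.
Set Implicit Arguments.

Lemma bump0S n : bump 0 n = n.+1.
Proof. by []. Qed.

Section P.
Variables (R : zmodType) (B : int -> int -> R).
Hypothesis hB : forall i j : int, (i <= 0)%R \/ (j <= 0)%R -> B i j = 0.

Lemma rel_eq (A : int -> int -> R) : solves B A ->
  forall i j, A i j = B i j + A (i - 1) j + A i (j - 1).
Proof.
move=> [h _] i j; rewrite h -addrA [A (i-1) j + _]addrC addrA.
by rewrite subrK subrK.
Qed.

Lemma negj (A : int -> int -> R) : solves B A ->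
  forall (n : nat) i, A i (- n%:Z) = 0.
Proof.
move=> hA n; elim: n => [|n IH] i; first by case: hA => _ [_ ->].
case: hA => [h [_ _]].
have := h i (- n%:Z); rewrite hB; last by right; lia.
rewrite !IH subrr sub0r => /eqP; rewrite eq_sym oppr_eq0 => /eqP.
by have -> : - n%:Z - 1 = - (n.+1)%:Z by lia.
Qed.

Lemma negi (A : int -> int -> R) : solves B A ->
  forall (n : nat) j, A (- n%:Z) j = 0.
Proof.
move=> hA n; elim: n => [|n IH] j; first by case: hA => _ [-> _].
case: hA => [h [_ _]].
have := h (- n%:Z) j; rewrite hB; last by left; lia.
rewrite !IH sub0r subr0 => /eqP; rewrite eq_sym oppr_eq0 => /eqP.
by have -> : - n%:Z - 1 = - (n.+1)%:Z by lia.
Qed.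

Lemma uniqA (A1 A2 : int -> int -> R) : solves B A1 -> solves B A2 ->
  forall i j, A1 i j = A2 i j.
Proof.
move=> h1 h2.
have pos : forall m n : nat, A1 m%:Z n%:Z = A2 m%:Z n%:Z.
  elim=> [|m IHm] n.
    by case: h1 => _ [-> _]; case: h2 => _ [-> _].
  elim: n => [|n IHn].
    by case: h1 => _ [_ ->]; case: h2 => _ [_ ->].
  rewrite (rel_eq h1) (rel_eq h2).
  have -> : (m.+1)%:Z - 1 = m%:Z by lia.
  have -> : (n.+1)%:Z - 1 = n%:Z by lia.
  by rewrite IHm IHn.
move=> [m|m] [n|n].
- exact: pos.
- by rewrite NegzE (negj h1) (negj h2).
- by rewrite NegzE (negi h1) (negi h2).
- by rewrite NegzE (negi h1) (negi h2).
Qed.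

Lemma term0 i j k : (i <= 0 \/ j <= 0 \/ i + j <= k%:Z + 1) ->
  formula_term B i j k = 0.
Proof.
move=> h; rewrite /formula_term big1 // => l _.
rewrite hB ?mul0rn //.
have := ltn_ord l; rewrite ltnS => hl; lia.
Qed.

Lemma term_rec i j k : formula_term B i j k.+1 =
  formula_term B (i - 1) j k + formula_term B i (j - 1) k.
Proof.
rewrite /formula_term big_ord_recl /=.
under eq_bigr => l _ do rewrite ?lift0 ?bump0S binS mulrnDr.
rewrite big_split /= addrA addrC; congr (_ + _).
  apply: eq_bigr => l _. congr (B _ _ *+ _); lia.
rewrite [in RHS]big_ord_recl /= big_ord_recr /= (bin_small (ltnSn k)) mulr0n addr0 !bin0.
congr (_ + _).
  by congr (B _ _ *+ _); lia.
rewrite addr0; apply: eq_bigr => l _; rewrite ?lift0 ?bump0S /=; congr (B _ _ *+ _); lia.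
Qed.

Definition S i j M := \sum_(k < M) formula_term B i j k.

Lemma S_rec i j M : S i j M.+1 = B i j + S (i - 1) j M + S i (j - 1) M.
Proof.
rewrite /S big_ord_recl /= -addrA -big_split /=; congr (_ + _).
  rewrite /formula_term big_ord1 /= bin0 mulr1n; congr (B _ _); lia.
by apply: eq_bigr => k _; rewrite ?lift0 ?bump0S term_rec.
Qed.

Definition NN (i j : int) := (absz i + absz j).+1.
Definition A0 i j := S i j (NN i j).

Lemma S_stable i j M : (NN i j <= M)%N -> S i j M = A0 i j.
Proof.
rewrite /A0; elim: M => [|M IH] hM; first by rewrite /NN in hM.
case: (leqP (NN i j) M) => h.
  rewrite /S big_ord_recr /= -/(S i j M) IH // term0 ?addr0 //.
  right; right; rewrite /NN in h; lia.
have -> : M.+1 = NN i j by apply/eqP; rewrite eqn_leq hM h.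
by [].
Qed.

Lemma A0_solves : solves B A0.
Proof.
split; last split.
- move=> i j.
  rewrite -(@S_stable i j (NN i j).+2); last by rewrite /NN; lia.
  rewrite -(@S_stable (i - 1) j (NN i j).+1); last by rewrite /NN; lia.
  rewrite -(@S_stable i (j - 1) (NN i j).+1); last by rewrite /NN; lia.
  by rewrite S_rec addrAC !addrK.
- move=> j; rewrite /A0 /S big1 // => k _; rewrite term0 //; left; lia.
- move=> i; rewrite /A0 /S big1 // => k _; rewrite term0 //; right; left; lia.
Qed.

End P.

Theorem proposition2 (R : zmodType) (B : int -> int -> R)
  (hB : forall i j : int, (i <= 0)%R \/ (j <= 0)%R -> B i j = 0) :
  (exists A : int -> int -> R, solves B A) /\
  (forall A1 A2 : int -> int -> R, solves B A1 -> solves B A2 ->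
     forall i j : int, A1 i j = A2 i j) /\
  (forall A : int -> int -> R, solves B A ->
     forall i j : int, has_sum (formula_term B i j) (A i j)).
Proof.
split; first by exists (A0 R B); exact: (A0_solves R B hB).
split; first exact: (uniqA hB).
move=> A hA i j; exists (NN i j) => M hM.
rewrite (uniqA hB hA (A0_solves R B hB)).
exact: (S_stable R B hB).
Qed.
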